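(* There exists a $10$-ary $3$-frameproof code of length $5$ and cardinality $135$ satisfying Property $P(2)$.
   Context: For $P\subseteq F^l$ over a finite alphabet $F$, $desc(P)=\{x\in F^l: \text{for every } i \text{ there is } y\in P \text{ with } x_i=y_i\}$. For an integer $c\geq 2$, a $c$-frameproof code is a subset $C\subseteq F^l$ with $desc(P)\cap C=P$ for every $P\subseteq C$ with $|P|\leq c$; it is $q$-ary if $|F|=q$. A $c$-frameproof code $C$ over an alphabet $S$ satisfies Property $P(t)$ if there is a special element $\infty\in S$ such that every codeword has at most $t-1$ coordinates equal to $\infty$ and any two codewords that agree in $t$ coordinates where their common value is not $\infty$ are equal. *)

(* Defs.v *)
From mathcomp Require Import all_boot.
Set Implicit Arguments. Unset Strict Implicit. Unset Printing Implicit Defensive.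

Definition word (F : finType) (l : nat) := {ffun 'I_l -> F}.

Definition desc (F : finType) (l : nat) (P : {set word F l}) : {set word F l} :=
  [set x : word F l | [forall i : 'I_l, [exists y in P, x i == y i]]].

Definition frameproof (F : finType) (l c : nat) (C : {set word F l}) : Prop :=
  forall P : {set word F l}, P \subset C -> #|P| <= c -> desc P :&: C = P.

Definition propertyP (F : finType) (l t : nat) (C : {set word F l}) : Prop :=
  exists inf : F,
    (forall x, x \in C -> #|[set i : 'I_l | x i == inf]| <= t - 1) /\
    (forall x y, x \in C -> y \in C ->
       (exists I : {set 'I_l}, #|I| = t /\
          forall i, i \in I -> x i = y i /\ x i != inf) ->
       x = y).

(* Main.v *)
Require Import Defs.
From mathcomp Require Import all_boot.
From mathcomp Require Import zify.
Set Implicit Arguments. Unset Strict Implicit. Unset Printing Implicit Defensive.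

Definition rows : seq (seq nat) := [::[::0;0;3;0;9];
 [::0;1;5;1;9];
 [::0;2;4;2;9];
 [::1;0;4;1;9];
 [::1;1;3;2;9];
 [::1;2;5;0;9];
 [::2;0;5;2;9];
 [::2;1;4;0;9];
 [::2;2;3;1;9];
 [::9;0;0;3;0];
 [::9;0;1;5;1];
 [::9;0;2;4;2];
 [::9;1;0;4;1];
 [::9;1;1;3;2];
 [::9;1;2;5;0];
 [::9;2;0;5;2];
 [::9;2;1;4;0];
 [::9;2;2;3;1];
 [::3;9;0;0;3];
 [::4;9;0;1;5];
 [::5;9;0;2;4];
 [::4;9;1;0;4];
 [::5;9;1;1;3];
 [::3;9;1;2;5];
 [::5;9;2;0;5];
 [::3;9;2;1;4];
 [::4;9;2;2;3];
 [::6;3;9;0;0];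
 [::8;4;9;0;1];
 [::7;5;9;0;2];
 [::7;4;9;1;0];
 [::6;5;9;1;1];
 [::8;3;9;1;2];
 [::8;5;9;2;0];
 [::7;3;9;2;1];
 [::6;4;9;2;2];
 [::3;6;3;9;0];
 [::4;8;4;9;0];
 [::5;7;5;9;0];
 [::3;7;4;9;1];
 [::4;6;5;9;1];
 [::5;8;3;9;1];
 [::3;8;5;9;2];
 [::4;7;3;9;2];
 [::5;6;4;9;2];
 [::3;3;6;3;9];
 [::3;4;8;4;9];
 [::3;5;7;5;9];
 [::4;3;7;4;9];
 [::4;4;6;5;9];
 [::4;5;8;3;9];
 [::5;3;8;5;9];
 [::5;4;7;3;9];
 [::5;5;6;4;9];
 [::9;3;3;6;3];
 [::9;3;4;8;4];
 [::9;3;5;7;5];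
 [::9;4;3;7;4];
 [::9;4;4;6;5];
 [::9;4;5;8;3];
 [::9;5;3;8;5];
 [::9;5;4;7;3];
 [::9;5;5;6;4];
 [::6;9;3;3;6];
 [::7;9;3;4;8];
 [::8;9;3;5;7];
 [::7;9;4;3;7];
 [::8;9;4;4;6];
 [::6;9;4;5;8];
 [::8;9;5;3;8];
 [::6;9;5;4;7];
 [::7;9;5;5;6];
 [::0;6;9;3;3];
 [::2;7;9;3;4];
 [::1;8;9;3;5];
 [::1;7;9;4;3];
 [::0;8;9;4;4];
 [::2;6;9;4;5];
 [::2;8;9;5;3];
 [::1;6;9;5;4];
 [::0;7;9;5;5];
 [::6;0;6;9;3];
 [::7;2;7;9;3];
 [::8;1;8;9;3];
 [::6;1;7;9;4];
 [::7;0;8;9;4];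
 [::8;2;6;9;4];
 [::6;2;8;9;5];
 [::7;1;6;9;5];
 [::8;0;7;9;5];
 [::6;6;0;6;9];
 [::6;7;2;7;9];
 [::6;8;1;8;9];
 [::7;6;1;7;9];
 [::7;7;0;8;9];
 [::7;8;2;6;9];
 [::8;6;2;8;9];
 [::8;7;1;6;9];
 [::8;8;0;7;9];
 [::9;6;6;0;6];
 [::9;6;7;2;7];
 [::9;6;8;1;8];
 [::9;7;6;1;7];
 [::9;7;7;0;8];
 [::9;7;8;2;6];
 [::9;8;6;2;8];
 [::9;8;7;1;6];
 [::9;8;8;0;7];
 [::0;9;6;6;0];
 [::1;9;6;7;2];
 [::2;9;6;8;1];
 [::1;9;7;6;1];
 [::2;9;7;7;0];
 [::0;9;7;8;2];
 [::2;9;8;6;2];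
 [::0;9;8;7;1];
 [::1;9;8;8;0];
 [::3;0;9;6;6];
 [::5;1;9;6;7];
 [::4;2;9;6;8];
 [::4;1;9;7;6];
 [::3;2;9;7;7];
 [::5;0;9;7;8];
 [::5;2;9;8;6];
 [::4;0;9;8;7];
 [::3;1;9;8;8];
 [::0;3;0;9;6];
 [::1;5;1;9;6];
 [::2;4;2;9;6];
 [::0;4;1;9;7];
 [::1;3;2;9;7];
 [::2;5;0;9;7];
 [::0;5;2;9;8];
 [::1;4;0;9;8];
 [::2;3;1;9;8]].

Lemma R1 : [&& uniq rows, all (fun r => size r == 5) rows & all (all (fun a => a < 10)) rows].
Proof. vm_compute. reflexivity. Qed.

Lemma R2 : all (fun r => all (fun i => all (fun j => (i == j) || ~~ ((nth 0 r i == 9) && (nth 0 r j == 9))) (iota 0 5)) (iota 0 5)) rows.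
Proof. vm_compute. reflexivity. Qed.

Lemma R3 : all (fun r => all (fun r' => (r == r') || all (fun i => all (fun j => (i == j) || ~~ [&& nth 0 r i == nth 0 r' i, nth 0 r i != 9, nth 0 r j == nth 0 r' j & nth 0 r j != 9]) (iota 0 5)) (iota 0 5)) rows) rows.
Proof. vm_compute. reflexivity. Qed.

Definition mkw (r : seq nat) : word 'I_10 5 := [ffun i : 'I_5 => inord (nth 0 r i)].
Definition s : seq (word 'I_10 5) := map mkw rows.
Definition C : {set word 'I_10 5} := [set x in s].
Definition inf : 'I_10 := inord 9.

Lemma R1a : uniq rows. Proof. by case/and3P: R1. Qed.
Lemma R1b r : r \in rows -> size r = 5.
Proof. by move=> Hr; case/and3P: R1 => _ /allP /(_ r Hr) /eqP. Qed.
Lemma R1c r i : r \in rows -> nth 0 r i < 10.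
Proof.
move=> Hr; case/and3P: R1 => _ _ /allP /(_ r Hr) /allP H.
case: (ltnP i (size r)) => h; first by apply: H; exact: mem_nth.
by rewrite nth_default.
Qed.

Lemma val_mkw r i : r \in rows -> val (mkw r i) = nth 0 r i.
Proof. by move=> Hr; rewrite /mkw ffunE /= inordK // R1c. Qed.

Lemma eqw r r' i : r \in rows -> r' \in rows ->
  (mkw r i == mkw r' i) = (nth 0 r i == nth 0 r' i).
Proof. by move=> H H'; rewrite -val_eqE /= !val_mkw. Qed.

Lemma infw r i : r \in rows -> (mkw r i == inf) = (nth 0 r i == 9).
Proof. by move=> H; rewrite -val_eqE /= val_mkw // /inf /= inordK. Qed.

Lemma mkw_inj : {in rows &, injective mkw}.
Proof.
move=> r r' H H' E; apply: (@eq_from_nth _ 0); first by rewrite !R1b.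
move=> i; rewrite R1b // => Hi.
have := f_equal (fun f : word 'I_10 5 => val (f (Ordinal Hi))) E.
by rewrite /= !val_mkw.
Qed.

Lemma s_uniq : uniq s.
Proof. rewrite map_inj_in_uniq; [exact: R1a | exact: mkw_inj]. Qed.

Lemma inC x : x \in C -> exists2 r, r \in rows & x = mkw r.
Proof. by rewrite inE => /mapP. Qed.

Lemma inf_lem x i j : x \in C -> x i == inf -> x j == inf -> i = j.
Proof.
case/inC => r Hr ->; rewrite !infw // => Hi Hj.
apply/eqP; rewrite -val_eqE; apply: contraTT isT => Hne.
have H1 := allP R2 r Hr.
have H2 := allP H1 i (ltac:(by rewrite mem_iota /= ltn_ord)).
have H3 := allP H2 j (ltac:(by rewrite mem_iota /= ltn_ord)).
by move: H3; rewrite (negbTE Hne) Hi Hj.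
Qed.

Lemma pw x y i j : x \in C -> y \in C -> i != j ->
  x i = y i -> x i != inf -> x j = y j -> x j != inf -> x = y.
Proof.
case/inC => r Hr ->; case/inC => r' Hr' ->.
move=> Hne /eqP Ei Ii /eqP Ej Ij.
move: Ei Ii Ej Ij; rewrite !eqw // !infw // => Ei Ii Ej Ij.
have H1 := allP R3 r Hr.
have /orP [/eqP -> //| H2] := allP H1 r' Hr'.
have H3 := allP H2 i (ltac:(by rewrite mem_iota /= ltn_ord)).
have H4 := allP H3 j (ltac:(by rewrite mem_iota /= ltn_ord)).
by move: H4; rewrite (inj_eq val_inj) (negbTE Hne) Ei Ii Ej Ij.
Qed.

Lemma inf_card x : x \in C -> #|[set i : 'I_5 | x i == inf]| <= 1.
Proof.
move=> xC; rewrite leqNgt; apply/negP => /card_gt1P [i [j [Hi Hj Hne]]].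
move: Hi Hj; rewrite !inE => Hi Hj.
by move: Hne; rewrite (inf_lem xC Hi Hj) eqxx.
Qed.

Theorem lemma4 :
  exists (F : finType) (C : {set word F 5}),
    #|F| = 10 /\ #|C| = 135 /\ frameproof 3 C /\ propertyP 2 C.
Proof.
exists ('I_10 : finType), C; split; first by rewrite card_ord.
split; first by rewrite cardsE; move/card_uniqP: s_uniq => ->; rewrite size_map.
split; last first.
  exists inf; split; first by move=> x xC; exact: inf_card.
  move=> x y xC yC [I [cI HI]].
  have : 1 < #|I| by rewrite cI.
  case/card_gt1P => i [j [iI jI Hne]].
  have [Ei Ii] := HI i iI; have [Ej Ij] := HI j jI.
  exact: (pw xC yC Hne Ei Ii Ej Ij).
move=> P sPC cP; apply/setP => x; rewrite inE; apply/idP/idP; last first.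
  move=> xP; rewrite (subsetP sPC) // andbT inE.
  by apply/forallP => i; apply/existsP; exists x; rewrite xP eqxx.
case/andP => xd xC; case: (boolP (x \in P)) => // xnP; exfalso.
rewrite inE in xd; move/forallP in xd.
pose f i := odflt x [pick y in P | x i == y i].
have Hf i : f i \in P /\ x i = f i i.
  rewrite /f; case: pickP => [y /andP [yP /eqP e] | H] //=; exfalso.
  have /existsP [y /andP [yP e]] := xd i.
  by have := H y; rewrite yP e.
pose N := [set i | x i != inf].
have cN : 4 <= #|N|.
  have := cardsC N; rewrite card_ord.
  have -> : ~: N = [set i | x i == inf] by apply/setP => i; rewrite !inE negbK.
  have := inf_card xC; move: #|N| #|[set i | x i == inf]| => a b.
  move=> h1 h2; lia.
case: (boolP (dinjectiveb f N)).
  move/dinjectiveP => inj; have := card_in_imset inj.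
  have : f @: N \subset P by apply/subsetP => y /imsetP [i _ ->]; exact: (Hf i).1.
  move/subset_leq_card => h1 h2.
  have := leq_trans (leq_trans cN (eq_leq (esym h2))) (leq_trans h1 cP).
  by [].
case/dinjectivePn => i iN [j jN Efij].
move: jN; rewrite inE /= => /andP [ji jN].
move: iN jN; rewrite !inE => iN jN.
have [fiP Ei] := Hf i; have [_ Ej] := Hf j.
have yC : f i \in C := subsetP sPC _ fiP.
rewrite -Efij in Ej.
have Hne : i != j by rewrite eq_sym.
have e := pw xC yC Hne Ei iN Ej jN.
by move: xnP; rewrite e fiP.
Qed.
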